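(* Let $\mathcal{C}$ be a $(2,1)$ binary convolutional code with polynomial generator matrix $(g_1(D)\ \ g_2(D))$, where $g_i(D)=\sum_{j=0}^{m}g_{i,j}D^j\in\mathbb{F}_2[D]$ and $m$ is the maximum degree of $g_1,g_2$. Then for every $k\ge m+1$, the $[2k,k]$ linear code $\mathcal{C}_{\mathrm{tb}}$ obtained from $\mathcal{C}$ by tailbiting is isodual.
   Context: Tailbiting: for $k\ge m+1$, let $\mathbf{g}=(g_{1,0},g_{2,0},g_{1,1},g_{2,1},\ldots,g_{1,m},g_{2,m},0,\ldots,0)\in\mathbb{F}_2^{2k}$. The tailbiting code $\mathcal{C}_{\mathrm{tb}}\subseteq\mathbb{F}_2^{2k}$ is the binary linear code generated by the $k\times 2k$ matrix whose $j$-th row ($j=0,\ldots,k-1$) is the cyclic shift of $\mathbf{g}$ to the right by $2j$ positions (so the last $m$ rows wrap around). A binary linear code $\mathcal{C}'$ of length $N$ is isodual if there is a permutation $\pi$ of the $N$ coordinates with $\mathcal{C}'=\pi(\mathcal{C}'^\perp)$, where $\mathcal{C}'^\perp$ is the dual code with respect to the standard inner product.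
   Formalization: The $k\times 2k$ tailbiting generator matrix is also assumed to have rank k, so $\mathcal{C}_{\mathrm{tb}}$ has dimension k as a [2k,k] code. The paper assumes this as well. *)

(* Defs.v *)
From HB Require Import structures.
From mathcomp Require Import all_boot all_order all_algebra all_fingroup.
Set Implicit Arguments. Unset Strict Implicit. Unset Printing Implicit Defensive.
Import GRing.Theory.
Local Open Scope ring_scope.

Definition dual_code n (C : pred 'rV['F_2]_n) : pred 'rV['F_2]_n :=
  [pred w | [forall v, (v \in C) ==> (v *m w^T == 0)]].

(* Image of a code under a coordinate permutation s: (pi C) = { v o s^-1 | v in C }.
   Isodual: C = pi(C^perp) for some permutation pi of the coordinates. *)
Definition perm_code n (s : 'S_n) (C : pred 'rV['F_2]_n) : pred 'rV['F_2]_n :=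
  [pred w | col_perm s w \in C].

Definition isodual n (C : pred 'rV['F_2]_n) : Prop :=
  exists s : 'S_n, forall v, (v \in C) = (v \in perm_code s (dual_code C)).

(* The interleaved coefficient vector g = (g10,g20,g11,g21,...,g1m,g2m,0,...,0):
   entry i is g1_(i/2) if i is even, g2_(i/2) if i is odd (coefficients beyond
   the degree are 0). *)
Definition tb_entry (g1 g2 : {poly 'F_2}) (i : nat) : 'F_2 :=
  if odd i then g2`_(i./2) else g1`_(i./2).

(* k x 2k tailbiting generator matrix: row j is g cyclically shifted right by 2j. *)
Definition tb_gen (g1 g2 : {poly 'F_2}) (k : nat) : 'M['F_2]_(k, 2 * k) :=
  \matrix_(j < k, c < 2 * k) tb_entry g1 g2 ((c + (2 * k - 2 * j)) %% (2 * k)).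

Definition tb_code (g1 g2 : {poly 'F_2}) (k : nat) : pred 'rV['F_2]_(2 * k) :=
  [pred v | (v <= tb_gen g1 g2 k)%MS].
Arguments tb_code g1 g2 k : clear implicits.
Arguments tb_gen g1 g2 k : clear implicits.

(* Main.v *)
Require Import Defs.
From HB Require Import structures.
From mathcomp Require Import all_boot all_order all_algebra all_fingroup.
From mathcomp Require Import zify.
Import GRing.Theory.

Lemma F2xx (x : 'F_2) : (x + x = 0)%R.
Proof. by case: x => [[|[|]]] // ?; apply/val_inj. Qed.

Lemma zm1 n (i j l : 'I_n.+1) : (j - l - i - j = - i - l)%R.
Proof. by rewrite -addrA addrC !addrA subrK. Qed.
Lemma zm2 n (i j l : 'I_n.+1) : (- (j - l - i) - l = i - j)%R.
Proof. by rewrite !opprB addrA addrAC addrK. Qed.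

Definition sn (n : nat) (c : nat) : nat :=
  let i : 'I_n.+1 := inord (c./2) in
  if odd c then (2 * val (- i)%R)%N else (2 * val (- i)%R).+1.

Lemma sn_lt n c : (sn n c < 2 * n.+1)%N.
Proof. rewrite /sn; have := ltn_ord (- (inord (c./2) : 'I_n.+1))%R; case: odd => /=; lia. Qed.

Lemma half2 x : ((2 * x)./2 = x)%N. Proof. by rewrite mul2n half_double. Qed.
Lemma half2S x : ((2 * x).+1./2 = x)%N. Proof. by rewrite mul2n /= uphalf_double. Qed.
Lemma odd2 x : odd (2 * x) = false. Proof. by rewrite mul2n odd_double. Qed.
Lemma odd2S x : odd (2 * x).+1 = true. Proof. by rewrite /= odd2. Qed.

Lemma snK n c : (c < 2 * n.+1)%N -> sn n (sn n c) = c.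
Proof.
move=> lt.
have hc : (c./2 < n.+1)%N by lia.
have hh := odd_double_half c.
rewrite {2}/sn; case: ifP => oc.
  rewrite /sn odd2 half2 inord_val opprK /= inordK //; lia.
rewrite /sn odd2S half2S inord_val opprK /= inordK //; lia.
Qed.

Definition sf n (c : 'I_(2 * n.+1)) : 'I_(2 * n.+1) := Ordinal (sn_lt n c).
Lemma sf_inj n : injective (@sf n).
Proof. apply: (can_inj (g := @sf n)) => c; apply: val_inj => /=; exact: snK. Qed.
Definition sp n : 'S_(2 * n.+1) := perm (@sf_inj n).

Lemma sum2 (R : nmodType) (F : nat -> R) K :
  (\sum_(c < 2 * K) F c = \sum_(i < K) (F (2 * i)%N + F (2 * i).+1))%R.
Proof.
rewrite -(big_mkord xpredT) -(big_mkord xpredT (fun i => F (2 * i)%N + F (2 * i).+1)%R).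
elim: K => [|K IH]; first by rewrite !big_geq.
rewrite (_ : (2 * K.+1 = (2 * K).+2)%N); last by lia.
by rewrite !big_nat_recr //= IH GRing.addrA.
Qed.

Lemma modS2 y K : (0 < K)%N -> ((2 * y).+1 %% (2 * K) = (2 * (y %% K)).+1)%N.
Proof.
move=> K0.
rewrite (_ : (2 * y).+1 = y %/ K * (2 * K) + (2 * (y %% K)).+1)%N; last first.
  rewrite {1}(divn_eq y K); nia.
rewrite modnMDl modn_small //; have := ltn_pmod y K0; lia.
Qed.

Lemma ent1 g1 g2 n (x j : 'I_n.+1) :
  tb_entry g1 g2 ((2 * x + (2 * n.+1 - 2 * j)) %% (2 * n.+1)) = (g1`_(val (x - j)))%R.
Proof.
rewrite (_ : (2 * x + (2 * n.+1 - 2 * j) = 2 * (x + (n.+1 - j)))%N); last first.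
  have := ltn_ord j; lia.
by rewrite -muln_modr /tb_entry odd2 half2 /= modnDmr.
Qed.

Lemma ent2 g1 g2 n (x j : 'I_n.+1) :
  tb_entry g1 g2 (((2 * x).+1 + (2 * n.+1 - 2 * j)) %% (2 * n.+1)) = (g2`_(val (x - j)))%R.
Proof.
rewrite (_ : ((2 * x).+1 + (2 * n.+1 - 2 * j) = (2 * (x + (n.+1 - j))).+1)%N); last first.
  have := ltn_ord j; lia.
by rewrite modS2 // /tb_entry odd2S half2S /= modnDmr.
Qed.

Local Open Scope ring_scope.

Lemma tau_inj n (j l : 'I_n.+1) : injective (fun i : 'I_n.+1 => j - l - i).
Proof. by apply: (can_inj (g := fun i : 'I_n.+1 => j - l - i)) => i; rewrite /= opprB addrC subrK. Qed.

Lemma orth g1 g2 n :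
  tb_gen g1 g2 n.+1 *m (col_perm (sp n) (tb_gen g1 g2 n.+1))^T = 0.
Proof.
apply/matrixP => j l; rewrite !mxE.
pose Fn (c : nat) := tb_entry g1 g2 ((c + (2 * n.+1 - 2 * j)) %% (2 * n.+1))%N *
   tb_entry g1 g2 ((sn n c + (2 * n.+1 - 2 * l)) %% (2 * n.+1))%N.
rewrite (eq_bigr (fun c : 'I_(2*n.+1) => Fn (val c))); last by move=> c _; rewrite !mxE permE.
rewrite (sum2 _ Fn).
rewrite (eq_bigr (fun i : 'I_n.+1 => g1`_(nat_of_ord (i - j : 'I_n.+1)) * g2`_(nat_of_ord (- i - l : 'I_n.+1)) +
                   g2`_(nat_of_ord (i - j : 'I_n.+1)) * g1`_(nat_of_ord (- i - l : 'I_n.+1)))); last first.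
  move=> i _; rewrite /Fn /sn odd2 half2 odd2S half2S inord_val ent1 ent2.
  by rewrite ent1 ent2.
have E : \sum_(i < n.+1) g2`_(nat_of_ord (i - j : 'I_n.+1)) * g1`_(nat_of_ord (- i - l : 'I_n.+1))
  = \sum_(i < n.+1) g1`_(nat_of_ord (i - j : 'I_n.+1)) * g2`_(nat_of_ord (- i - l : 'I_n.+1)).
  rewrite (reindex_inj (tau_inj _ j l)); apply: eq_bigr => i _.
  by rewrite zm1 zm2 mulrC.
rewrite big_split E; exact: F2xx.
Qed.

Theorem proposition2 (g1 g2 : {poly 'F_2}) (k : nat) :
  let m := maxn (size g1).-1 (size g2).-1 in
  (m.+1 <= k)%N ->
  mxrank (tb_gen g1 g2 k) = k ->
  isodual (tb_code g1 g2 k).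
Proof.
move=> m; case: k => [//|n] _ Hr; set G := tb_gen g1 g2 n.+1 in Hr *.

have pfree : row_free (perm_mx (sp n)^-1 : 'M['F_2]_(2 * n.+1)).
  by rewrite row_free_unit unitmx_perm.
have dualE : forall w, (w \in dual_code (tb_code g1 g2 n.+1)) = (w <= kermx G^T)%MS.
  move=> w; rewrite sub_kermx inE; apply/forallP/eqP.
    move=> H; apply: trmx_inj; rewrite trmx_mul trmxK trmx0.
    apply/row_matrixP => r; rewrite row_mul row0.
    by have := H (row r G); rewrite inE row_sub /= => /eqP.
  move=> H v; apply/implyP; rewrite inE => /submxP [x ->].
  by rewrite -/G -mulmxA -[G]trmxK -trmx_mul H trmx0 mulmx0.
have sub : (col_perm (sp n) G <= kermx G^T)%MS.
  rewrite sub_kermx (_ : col_perm (sp n) G *m G^T = (G *m (col_perm (sp n) G)^T)^T).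
    by rewrite orth trmx0.
  by rewrite trmx_mul !trmxK.
have Heq : (col_perm (sp n) G == kermx G^T)%MS.
  have := (mxrank_leqif_eq sub).2.
  rewrite mxrank_ker mxrank_tr Hr col_permE mxrankMfree // Hr.
  by rewrite (_ : (2 * n.+1 - n.+1 = n.+1)%N) ?eqxx //; lia.
exists (sp n) => v.
rewrite [in RHS]inE dualE -(eqmxP Heq) !col_permE submxMfree //.
Qed.
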